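(* Under the hypotheses of the standing setting below, let $(u,v)$ be a bounded, decaying, optimal integrable positive solution. Then $u(x)\simeq|x|^{-\frac{n-\beta\gamma}{\gamma-1}}$.
   Context: Standing setting: $n\ge3$, $\beta>0$, $\gamma>1$, $\beta\gamma<n$, $p,q>0$ with $q\ge p$, $pq>(\gamma-1)^2$, $\sigma_1,\sigma_2\in(-\beta\gamma,\infty)$ with $\sigma_1\le\sigma_2$, $q_0+p_0\le\frac{n-\beta\gamma}{\gamma-1}$ where $q_0=\frac{\beta\gamma(\gamma-1+q)+(\gamma-1)\sigma_1+\sigma_2 q}{pq-(\gamma-1)^2}$, $p_0=\frac{\beta\gamma(\gamma-1+p)+(\gamma-1)\sigma_2+\sigma_1 p}{pq-(\gamma-1)^2}$; $c_1,c_2$ are double bounded (i.e. $1/C\le c_i(x)\le C$ for some $C>0$), and $(u,v)$ is a positive solution (nonnegative $L^1_{loc}$ functions, positive, satisfying the equations a.e.) of $u(x)=c_1(x)W_{\beta,\gamma}(|y|^{\sigma_1}v^q)(x)$, $v(x)=c_2(x)W_{\beta,\gamma}(|y|^{\sigma_2}u^p)(x)$, where $W_{\beta,\gamma}(f)(x)=\int_0^\infty\Big(\frac{\int_{B_t(x)}f(y)\,dy}{t^{n-\beta\gamma}}\Big)^{\frac{1}{\gamma-1}}\frac{dt}{t}$. For positive $f$, $f(x)\simeq g(x)$ means $1/c\le f(x)/g(x)\le c$ for some $c>0$ and all sufficiently large $|x|$; decaying means $u\simeq|x|^{-\theta_1}$, $v\simeq|x|^{-\theta_2}$ for some $\theta_1,\theta_2>0$.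 Optimal integrable means $(u,v)\in L^r\times L^s$ for all $r>\frac{n(\gamma-1)}{n-\beta\gamma}$ and $s>\max\big\{\frac{n(\gamma-1)}{n-\beta\gamma},\frac{n(\gamma-1)}{p\frac{n-\beta\gamma}{\gamma-1}-(\beta\gamma+\sigma_2)}\big\}$. *)

(* Defs.v *)
From HB Require Import structures.
From mathcomp Require Import all_boot all_order all_algebra.
From mathcomp Require Import all_classical all_reals all_analysis.
Set Implicit Arguments. Unset Strict Implicit. Unset Printing Implicit Defensive.
Import Order.TTheory GRing.Theory Num.Theory.
Local Open Scope classical_set_scope.
Local Open Scope ring_scope.

Section Defs.
Variable R : realType.

Definition enorm (n : nat) (x : 'rV[R]_n) : R :=
  Num.sqrt (\sum_(i < n) x ord0 i ^+ 2).

Definition eball (n : nat) (x : 'rV[R]_n) (t : R) : set 'rV[R]_n :=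
  [set y | enorm (y - x) < t].

Definition borelRn (n : nat) : set (set 'rV[R]_n) :=
  <<s [set B | exists x t, B = eball x t] >>.

(* Lebesgue integral on R^n of a nonnegative function, as the iterated
   Lebesgue integral over the coordinates (Tonelli). *)
Fixpoint iint (n : nat) : ('rV[R]_n -> \bar R) -> \bar R :=
  match n return ('rV[R]_n -> \bar R) -> \bar R with
  | 0 => fun f => f 0
  | m.+1 => fun f =>
      (\int[lebesgue_measure]_t iint (fun y : 'rV[R]_m =>
          f (row_mx (\row_(j < 1) t) y)))%E
  end.

Definition lnull (n : nat) (N : set 'rV[R]_n) : Prop :=
  exists B, borelRn B /\ N `<=` B /\ iint (fun y => (\1_B y)%:E) = 0%E.

Definition borel_fun (n : nat) (f : 'rV[R]_n -> R) : Prop :=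
  forall B : set R, measurable B -> borelRn (f @^-1` B).

Definition leb_measurable (n : nat) (f : 'rV[R]_n -> R) : Prop :=
  exists g N, borel_fun g /\ lnull N /\ (forall x, ~ N x -> f x = g x).

Definition L1loc (n : nat) (f : 'rV[R]_n -> R) : Prop :=
  leb_measurable f /\
  forall x t, 0 < t ->
    (iint (fun y => (\1_(eball x t) y * `|f y|)%:E) < +oo)%E.

Definition Lp (n : nat) (r : R) (f : 'rV[R]_n -> R) : Prop :=
  leb_measurable f /\ (iint (fun y => (`|f y| `^ r)%:E) < +oo)%E.

Definition wolff (n : nat) (beta gamma : R) (f : 'rV[R]_n -> R)
    (x : 'rV[R]_n) : \bar R :=
  (\int[lebesgue_measure]_(t in [set t : R | (0 < t)%R])
     (((iint (fun y => (\1_(eball x t) y * f y)%:E)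
         * ((t `^ (n%:R - beta * gamma))^-1)%:E) `^ (gamma - 1)^-1)
      * (t^-1)%:E))%E.

Definition simeq (n : nat) (f g : 'rV[R]_n -> R) : Prop :=
  exists c R0, 0 < c /\ forall x, R0 < enorm x ->
    c^-1 <= f x / g x <= c.

Definition double_bounded (n : nat) (c : 'rV[R]_n -> R) : Prop :=
  exists C, 0 < C /\ forall x, C^-1 <= c x <= C.

Definition bdd_fun (n : nat) (f : 'rV[R]_n -> R) : Prop :=
  exists M, forall x, `|f x| <= M.

End Defs.

(* Main.v *)
Require Import Defs.
From HB Require Import structures.
From mathcomp Require Import all_boot all_order all_algebra.
From mathcomp Require Import all_classical all_reals all_analysis.
From mathcomp.algebra_tactics Require Import ring lra.
Import Order.TTheory GRing.Theory Num.Theory.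
Local Open Scope classical_set_scope.
Local Open Scope ring_scope.

Lemma le_int_nm d (T : measurableType d) (R : realType) (mu : {measure set T -> \bar R})
  (D : set T) (f g : T -> \bar R) :
  (forall x, D x -> 0 <= f x)%E -> (forall x, D x -> f x <= g x)%E ->
  (\int[mu]_(x in D) f x <= \int[mu]_(x in D) g x)%E.
Proof.
move=> f0 fg.
have g0 : forall x, D x -> (0 <= g x)%E by move=> x Dx; exact: le_trans (f0 x Dx) (fg x Dx).
rewrite (ge0_integralE _ f0) (ge0_integralE _ g0).
apply: ereal_sup_le => _ [h /= hf <-]; exists h => //= x.
apply: le_trans (hf x) _.
rewrite /patch; case: ifP => // /set_mem Dx; exact: fg.
Qed.

Section S.
Variable R : realType.

Lemma iint_ge0 (n : nat) (f : 'rV[R]_n -> \bar R) :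
  (forall x, 0 <= f x)%E -> (0 <= iint f)%E.
Proof.
elim: n f => [|m IH] f f0 /=; first exact: f0.
apply: integral_ge0 => t _; apply: IH => y; exact: f0.
Qed.

Lemma iint_le (n : nat) (f g : 'rV[R]_n -> \bar R) :
  (forall x, 0 <= f x)%E -> (forall x, f x <= g x)%E -> (iint f <= iint g)%E.
Proof.
elim: n f g => [|m IH] f g f0 fg /=; first exact: fg.
apply: le_int_nm => t _; first by apply: iint_ge0 => y; exact: f0.
by apply: IH => y; [exact: f0|exact: fg].
Qed.

Definition box {n : nat} (a b : R) : set 'rV[R]_n :=
  [set y | forall i, a <= y ord0 i <= b].

Lemma box_row_mx (m : nat) (a b t : R) (y : 'rV[R]_m) :
  box a b (row_mx (\row_(j < 1) t) y : 'rV[R]_(m.+1)) <-> (a <= t <= b /\ box a b y).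
Proof.
split.
  move=> H; split.
    by have := H (lshift m (ord0 : 'I_1)); rewrite (row_mxEl (\row_(j < 1) t) y) mxE.
  by move=> i; have := H (rshift 1 i); rewrite (row_mxEr (\row_(j < 1) t) y).
move=> [Ht Hy] i; rewrite -(splitK (i : 'I_(1 + m))); case: (fintype.split (i : 'I_(1 + m))) => j /=.
  by rewrite (row_mxEl (\row_(j < 1) t) y) mxE.
by rewrite (row_mxEr (\row_(j < 1) t) y).
Qed.

Lemma iint_box (n : nat) (k a b : R) : 0 <= k -> a <= b ->
  iint (fun y : 'rV[R]_n => (k * \1_(box a b) y)%:E) = (k * (b - a) ^+ n)%:E.
Proof.
elim: n k => [|m IH] k k0 ab /=.
  by rewrite expr0 mulr1 indicE mem_set ?mulr1// => i; case: i.
have -> : (fun t : R => iint (fun y : 'rV[R]_m =>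
      (k * \1_(box a b) (row_mx (\row_(j < 1) t) y : 'rV[R]_(m.+1)))%:E))
   = (fun t => ((k * (b - a) ^+ m) * \1_(`[a, b]%classic) t)%:E).
  apply: funext => t.
  have -> : (fun y : 'rV[R]_m =>
      (k * \1_(box a b) (row_mx (\row_(j < 1) t) y : 'rV[R]_(m.+1)))%:E)
    = (fun y => ((k * \1_(`[a, b]%classic) t) * \1_(box a b) y)%:E).
    apply: funext => y; rewrite !indicE; congr (_%:E).
    have [H|H] := boolp.pselect (box a b (row_mx (\row_(j < 1) t) y : 'rV[R]_(m.+1))).
      have [Ht Hy] := (box_row_mx _ a b t y).1 H.
      by rewrite !mem_set ?mulr1// /= in_itv /=.
    rewrite memNset //.
    have [Ht|Ht] := boolp.pselect (a <= t <= b); last first.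
      by rewrite memNset ?mulr0 ?mul0r// /= in_itv /=; exact/negP.
    rewrite (memNset (A := box a b)) ?mulr0// => Hy; apply: H.
    exact/(box_row_mx _ a b t y).2.
  rewrite IH ?mulr_ge0//; congr (_%:E); rewrite mulrAC; congr (_ * _).
have HI := @integralZl_indic _ _ _ lebesgue_measure _ measurableT (fun _ => `[a, b]%classic) (k * (b - a) ^+ m).
rewrite /= in HI; rewrite HI//; last by move=> H; exfalso; move: H; rewrite ltNge mulr_ge0 // exprn_ge0 // subr_ge0.
rewrite integral_indic// setIT.
have HL := lebesgue_measure_itv `[a, b]%R. rewrite /= in HL.
have [ab'|ab'] := ltP a b.
  rewrite lte_fin ab' in HL.
  rewrite (_ : _ `[a, b]%classic = (b - a)%:E); last exact: HL.
  by rewrite -EFinM exprSr mulrA.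
rewrite lte_fin ltNge ab' /= in HL.
rewrite (_ : _ `[a, b]%classic = 0%E); last exact: HL.
have -> : b = a by apply/eqP; rewrite eq_le ab ab'.
by rewrite mule0 subrr expr0n /= mulr0.
Qed.

Lemma enorm_ge0 n (x : 'rV[R]_n) : 0 <= enorm x.
Proof. exact: sqrtr_ge0. Qed.

Lemma enorm_sqr n (x : 'rV[R]_n) : enorm x ^+ 2 = \sum_(i < n) x ord0 i ^+ 2.
Proof. by rewrite sqr_sqrtr // sumr_ge0 // => i _; exact: sqr_ge0. Qed.

Lemma enorm_box n (a b : R) (y : 'rV[R]_n) : (0 < n)%N -> 0 <= a ->
  box a b y -> a <= enorm y <= n%:R * b.
Proof.
move=> n0 a0 Hy.
have b0 : 0 <= b by have := Hy (Ordinal n0) => /andP[h1 h2]; lra.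
apply/andP; split.
  rewrite -(ger0_norm a0) -sqrtr_sqr ler_sqrt; last by rewrite sumr_ge0 // => i _; exact: sqr_ge0.
  rewrite (bigD1 (Ordinal n0)) //=; apply: ler_wpDr; first by rewrite sumr_ge0 // => i _; exact: sqr_ge0.
  by have := Hy (Ordinal n0) => /andP[h1 h2]; nra.
have nb0 : 0 <= n%:R * b by rewrite mulr_ge0.
rewrite -(ger0_norm nb0) -sqrtr_sqr ler_sqrt; last by rewrite sqr_ge0.
apply: (@le_trans _ _ (\sum_(i < n) b ^+ 2)).
  apply: ler_sum => i _; have := Hy i => /andP[h1 h2]; nra.
rewrite sumr_const card_ord -mulr_natr.
have n1 : 1 <= n%:R :> R by rewrite ler1n.
nra.
Qed.

Lemma enorm_sub_sqr n (x y : 'rV[R]_n) :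
  enorm (y - x) ^+ 2 <= 2 * enorm y ^+ 2 + 2 * enorm x ^+ 2.
Proof.
rewrite !enorm_sqr !mulr_sumr -big_split /=; apply: ler_sum => i _.
rewrite !mxE; have := sqr_ge0 (y ord0 i + x ord0 i); rewrite !expr2; nra.
Qed.

Lemma eball_of n (x y : 'rV[R]_n) (B t : R) : enorm y <= B ->
  2 * (enorm x + B) + 1 <= t -> eball x t y.
Proof.
rewrite /eball /=.
have := enorm_sub_sqr _ x y; have := enorm_ge0 _ (y - x); have := enorm_ge0 _ y;
  have := enorm_ge0 _ x.
set e := enorm (y - x); set X := enorm x; set Y := enorm y => X0 Y0 e0 He yB ht.
have B0 : 0 <= B by lra.
have t0 : 0 < t by lra.
have Y2 : Y ^+ 2 <= B ^+ 2 by nra.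
have t2 : (2 * (X + B) + 1) ^+ 2 <= t ^+ 2 by nra.
have et : e ^+ 2 < t ^+ 2 by nra.
rewrite ltNge; apply/negP => te; nra.
Qed.

Lemma box_sub (n : nat) (a b : R) (S : set 'rV[R]_n) (B : set 'rV[R]_n) :
  a <= b -> S `<=` B ->
  (forall y, box a b y -> S y) ->
  (((b - a) ^+ n)%:E <= iint (fun y => (\1_B y)%:E))%E.
Proof.
move=> ab SB bS; rewrite -[X in X%:E]mul1r -(iint_box n 1 a b ler01 ab).
apply: iint_le => y; first by rewrite lee_fin mulr_ge0 // indicE.
rewrite mul1r !indicE lee_fin.
have [H|H] := boolp.pselect (box a b y).
  by rewrite !mem_set //; exact/SB/bS.
by rewrite memNset //; case: (y \in B).
Qed.

Lemma lnull_far n (N : set 'rV[R]_n) (L : R) : (0 < n)%N -> lnull N ->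
  exists x, ~ N x /\ L <= enorm x.
Proof.
move=> n0 [B [_ [NB B0]]].
pose a := Num.max L 0.
have a0 : 0 <= a by rewrite /a le_max lexx orbT.
have [[x [bx Nx]]|H] := boolp.pselect (exists x, box a (a + 1) x /\ ~ N x).
  exists x; split => //; have := enorm_box _ _ _ _ n0 a0 bx.
  by rewrite /a => /andP[h _]; apply: le_trans h; rewrite le_max lexx.
have ab : a <= a + 1 by lra.
have Hs : forall y, box a (a + 1) y -> N y.
  move=> y hy; apply: boolp.contrapT => Ny; apply: H; by exists y.
have := box_sub _ _ _ _ _ ab NB Hs; rewrite B0 addrAC subrr add0r expr1n lee_fin.
by rewrite ler10.
Qed.

Lemma simeq_bounds (f g c : R) : 0 < c -> 0 < g -> c^-1 <= f / g <= c ->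
  c^-1 * g <= f /\ f <= c * g.
Proof.
move=> c0 g0 /andP[h1 h2]; split.
  by rewrite -ler_pdivlMr.
by rewrite -ler_pdivrMr // mulrC.
Qed.

Lemma powRN_anti (a b th : R) : 0 < a -> a <= b -> 0 <= th ->
  b `^ (- th) <= a `^ (- th).
Proof.
move=> a0 ab th0; rewrite !powRN lef_pV2 ?posrE ?powR_gt0 //; last exact: lt_le_trans ab.
by apply: ge0_ler_powR => //; rewrite nnegrE; [exact: ltW|exact: ltW (lt_le_trans a0 ab)].
Qed.

Lemma powR_min (a z b s : R) : 0 < a -> a <= z -> z <= b ->
  Num.min (a `^ s) (b `^ s) <= z `^ s.
Proof.
move=> a0 az zb; have z0 : 0 < z by exact: lt_le_trans az.
have [s0|s0] := leP 0 s.
  rewrite ge_min; apply/orP; left.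
  by apply: ge0_ler_powR => //; rewrite nnegrE ltW.
rewrite ge_min; apply/orP; right.
rewrite -(opprK s); apply: powRN_anti => //; lra.
Qed.

Lemma log_big (al Z X0 : R) : 0 < al -> exists X, X0 <= X /\ 0 < X /\ Z < al * ln X.
Proof.
move=> al0; pose X := Num.max (Num.max X0 1) (expR (Z / al + 1)).
have X1 : 1 <= X by rewrite /X !le_max lexx orbT.
exists X; split; first by rewrite /X !le_max lexx.
split; first lra.
have : Z / al + 1 <= ln X.
  rewrite -ler_expR lnK ?posrE; last lra.
  by rewrite /X le_max lexx orbT.
move=> h; have : Z / al * al = Z by rewrite mulrVK // unitfE gt_eqF.
nra.
Qed.

Lemma lnKT (m sg e T : R) : 0 < m -> 0 < T ->
  ln ((m * ((2 * T) `^ sg)^-1) `^ e * (2 * T)^-1 * T) =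
  e * ln m - e * sg * (ln 2 + ln T) - ln 2.
Proof.
move=> m0 T0.
have T2 : 0 < 2 * T by rewrite mulr_gt0.
have p0 : 0 < (2 * T) `^ sg by rewrite powR_gt0.
have q0 : 0 < m * ((2 * T) `^ sg)^-1 by rewrite mulr_gt0 ?invr_gt0.
rewrite lnM ?posrE ?mulr_gt0 ?invr_gt0 ?powR_gt0 //.
rewrite lnM ?posrE ?invr_gt0 ?powR_gt0 //.
rewrite ln_powR lnM ?posrE ?invr_gt0 //.
rewrite lnV ?posrE // ln_powR lnV ?posrE // lnM ?posrE //.
ring.
Qed.

Lemma arithB (lC1 lcu e lm sg l2 lT lD lnx lX th1 : R) :
  - lC1 + (e * lm - e * sg * (l2 + lT) - l2) <= lcu + (- th1) * lnx ->
  lT <= lD + lnx ->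
  lcu + lC1 - e * lm + sg * e * (l2 + lD) + l2 < (th1 - sg * e) * lX ->
  lX <= lnx -> 0 < sg * e -> 0 < th1 - sg * e -> False.
Proof.
move=> h1 h2 h3 h4 h5 h6.
have P1 : sg * e * lT <= sg * e * (lD + lnx) by rewrite ler_pM2l.
have P2 : (th1 - sg * e) * lX <= (th1 - sg * e) * lnx by rewrite ler_pM2l.
nra.
Qed.
End S.

Theorem proposition5 (R : realType) (n : nat) (beta gamma p q sigma1 sigma2 : R)
  (c1 c2 u v : 'rV[R]_n -> R) :
  (3 <= n)%N ->
  0 < beta -> 1 < gamma -> beta * gamma < n%:R ->
  0 < p -> 0 < q -> p <= q -> (gamma - 1) ^+ 2 < p * q ->
  - (beta * gamma) < sigma1 -> - (beta * gamma) < sigma2 -> sigma1 <= sigma2 ->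
  (let q0 := (beta * gamma * (gamma - 1 + q) + (gamma - 1) * sigma1 + sigma2 * q)
             / (p * q - (gamma - 1) ^+ 2) in
   let p0 := (beta * gamma * (gamma - 1 + p) + (gamma - 1) * sigma2 + sigma1 * p)
             / (p * q - (gamma - 1) ^+ 2) in
   q0 + p0 <= (n%:R - beta * gamma) / (gamma - 1)) ->
  double_bounded c1 -> double_bounded c2 ->
  (* (u, v) is a positive solution *)
  L1loc u -> L1loc v ->
  (forall x, 0 < u x) -> (forall x, 0 < v x) ->
  (exists N, lnull N /\ forall x, ~ N x ->
     (u x)%:E = ((c1 x)%:E
        * wolff beta gamma (fun y => (enorm y `^ sigma1 * v y `^ q)%R) x)%E) ->
  (exists N, lnull N /\ forall x, ~ N x ->
     (v x)%:E = ((c2 x)%:E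
        * wolff beta gamma (fun y => (enorm y `^ sigma2 * u y `^ p)%R) x)%E) ->
  (* bounded *)
  bdd_fun u -> bdd_fun v ->
  (* decaying *)
  (exists theta1 theta2, 0 < theta1 /\ 0 < theta2 /\
     simeq u (fun x => enorm x `^ (- theta1)) /\
     simeq v (fun x => enorm x `^ (- theta2))) ->
  (* optimal integrable *)
  (forall r, n%:R * (gamma - 1) / (n%:R - beta * gamma) < r -> Lp r u) ->
  (forall s, Num.max (n%:R * (gamma - 1) / (n%:R - beta * gamma))
                     (n%:R * (gamma - 1) /
                        (p * ((n%:R - beta * gamma) / (gamma - 1))
                         - (beta * gamma + sigma2))) < s -> Lp s v) ->
  simeq u (fun x => enorm x `^ (- ((n%:R - beta * gamma) / (gamma - 1)))).
Proof.
move=> n3 beta0 gam1 bgn p0 q0 pq pq2 s1 s2 s12 _ [C1 [C10 hc1]] _ _ _ upos vpos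
  [N1 [hN1 equ]] _ _ _ [th1 [th2 [th10 [th20 [[cu [R0u [cu0 hu]]] [cv [R0v [cv0 hv]]]]]]]] Lu _.
have n0 : (0 < n)%N by apply: leq_trans n3.
have nR : 3 <= n%:R :> R by rewrite (ler_nat R 3 n).
set s0 := (n%:R - beta * gamma) / (gamma - 1).
have sig0 : 0 < n%:R - beta * gamma by lra.
have gm0 : 0 < gamma - 1 by lra.
have s0pos : 0 < s0 by rewrite divr_gt0.
have ub x : R0u < enorm x -> 0 < enorm x -> cu^-1 * enorm x `^ (- th1) <= u x /\ u x <= cu * enorm x `^ (- th1).
  move=> hx hx0; apply: simeq_bounds => //; last exact: hu.
  exact: powR_gt0.
have dirA : s0 <= th1.
  rewrite leNgt; apply/negP => hlt.
  pose r := (n%:R / s0 + n%:R / th1) / 2.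
  have nn0 : 0 < n%:R :> R by lra.
  have e0 : n%:R * (gamma - 1) / (n%:R - beta * gamma) = n%:R / s0.
    by rewrite /s0 invf_div mulrA.
  have hs : n%:R / s0 < n%:R / th1.
    by rewrite ltr_pM2l // ltf_pV2 ?posrE.
  have hr : n%:R * (gamma - 1) / (n%:R - beta * gamma) < r by rewrite e0 /r; lra.
  have hs0 : 0 < n%:R / s0 by rewrite divr_gt0.
  have r0 : 0 < r by rewrite /r; lra.
  have rth : th1 * r < n%:R.
    have : th1 * (n%:R / th1) = n%:R by rewrite mulrC mulfVK // gt_eqF.
    have : th1 * (n%:R / s0) < s0 * (n%:R / s0) by rewrite ltr_pM2r.
    have -> : s0 * (n%:R / s0) = n%:R by rewrite mulrC mulfVK // gt_eqF.
    rewrite /r; nra.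
  have [_ hfin] := Lu r hr.
  set I := iint _ in hfin.
  have I0 : (0 <= I)%E by apply: iint_ge0 => y; rewrite lee_fin powR_ge0.
  have [M hM] : exists M, I = M%:E.
    by exists (fine I); rewrite fineK // ge0_fin_numE.
  pose L0 := Num.max R0u 0 + 1.
  have key L : L0 <= L ->
    (cu^-1 * (n%:R * (2 * L)) `^ (- th1)) `^ r * L ^+ n <= M.
    move=> hL.
    have [mx1 mx2] : R0u <= Num.max R0u 0 /\ 0 <= Num.max R0u 0.
      by rewrite !le_max !lexx orbT.
    have L0' : 0 < L by move: hL; rewrite /L0; lra.
    have RL : R0u < L by move: hL; rewrite /L0; lra.
    set m := (cu^-1 * _) `^ r.
    have : ((m * (2 * L - L) ^+ n)%:E <= I)%E.
      rewrite -iint_box ?powR_ge0 //; last lra.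
      apply: iint_le => y; first by rewrite lee_fin mulr_ge0 // ?powR_ge0 // indicE.
      rewrite lee_fin indicE.
      have [H|H] := boolp.pselect (@box R n L (2 * L) y); last first.
        by rewrite memNset // mulr0 powR_ge0.
      rewrite mem_set // mulr1.
      have /andP[y1 y2] := enorm_box _ _ _ _ _ n0 (ltW L0') H.
      have y0 : 0 < enorm y by lra.
      have [u1 _] := ub y (lt_le_trans RL y1) y0.
      rewrite ger0_norm; last exact: ltW.
      apply: ge0_ler_powR; rewrite ?nnegrE; first exact: ltW.
      - by rewrite mulr_ge0 ?invr_ge0 ?powR_ge0 // ltW.
      - exact: ltW.
      apply: le_trans u1; rewrite ler_pM2l ?invr_gt0 //.
      by apply: powRN_anti => //; exact: ltW.
    by rewrite hM lee_fin; have -> : 2 * L - L = L by ring.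
  pose A0 := r * (- ln cu - th1 * (ln n%:R + ln 2)).
  have al0 : 0 < n%:R - r * th1 by lra.
  have [L [hL [L0' hZ]]] := log_big R _ (ln M - A0) L0 al0.
  have := key L hL.
  have mpos : 0 < (cu^-1 * (n%:R * (2 * L)) `^ (- th1)) `^ r.
    by rewrite powR_gt0 // mulr_gt0 ?invr_gt0 // powR_gt0 // mulr_gt0 // mulr_gt0.
  have Lnpos : 0 < L ^+ n by rewrite exprn_gt0.
  move=> hk; have M0 : 0 < M by apply: lt_le_trans hk; rewrite mulr_gt0.
  move: hk; rewrite -ler_ln ?posrE ?mulr_gt0 //.
  rewrite lnM ?posrE // lnXn // ln_powR lnM ?posrE ?invr_gt0 ?powR_gt0 ?mulr_gt0 //.
  rewrite lnV ?posrE // ln_powR lnM ?posrE ?mulr_gt0 // lnM ?posrE //.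
  move: hZ; rewrite /A0 -mulr_natr; nra.
have dirB : th1 <= s0.
  rewrite leNgt; apply/negP => hgt.
  pose sg := n%:R - beta * gamma.
  pose e := (gamma - 1)^-1.
  have e0 : 0 < e by rewrite invr_gt0.
  have hs0e : s0 = sg * e by [].
  have [mx1 mx2] : R0v <= Num.max R0v 0 /\ 0 <= Num.max R0v 0.
    by rewrite !le_max !lexx orbT.
  pose a := Num.max R0v 0 + 1.
  have a1 : 1 <= a by rewrite /a; lra.
  have aR : R0v < a by rewrite /a; lra.
  pose bq := n%:R * (a + 1).
  have abq : a <= bq by rewrite /bq; nra.
  pose V := cv^-1 * bq `^ (- th2).
  have V0 : 0 < V by rewrite mulr_gt0 ?invr_gt0 // powR_gt0 //; lra.
  pose P := Num.min (a `^ sigma1) (bq `^ sigma1).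
  have P0 : 0 < P by rewrite lt_min !powR_gt0 //; lra.
  pose m := P * V `^ q.
  have m0 : 0 < m by rewrite mulr_gt0 // powR_gt0.
  pose f := fun y : 'rV[R]_n => enorm y `^ sigma1 * v y `^ q.
  have f0 y : 0 <= f y by rewrite mulr_ge0 ?powR_ge0.
  have fQ y : @box R n a (a + 1) y -> m <= f y /\ enorm y <= bq.
    move=> H; have /andP[y1 y2] := enorm_box _ _ _ _ _ n0 (le_trans ler01 a1) H.
    split => //.
    have y0 : 0 < enorm y by lra.
    have [v1 _] : cv^-1 * enorm y `^ (- th2) <= v y /\ v y <= cv * enorm y `^ (- th2).
      by apply: simeq_bounds => //; [exact: powR_gt0| apply: hv; lra].
    apply: ler_pM; rewrite ?powR_ge0 //; first exact: ltW.
      by apply: powR_min => //; lra.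
    apply: ge0_ler_powR; rewrite ?nnegrE; [exact: ltW|exact: ltW|exact: ltW (vpos y)|].
    apply: le_trans v1; rewrite ler_pM2l ?invr_gt0 //.
    by apply: powRN_anti => //; exact: ltW.
  have Ibound (x : 'rV[R]_n) t : 2 * (enorm x + bq) + 1 <= t ->
      (m%:E <= iint (fun y => (\1_(eball x t) y * f y)%:E))%E.
    move=> ht.
    have := iint_box R n m a (a + 1) (ltW m0) (ler_wpDr ler01 (lexx a)).
    rewrite (_ : a + 1 - a = 1); last by ring.
    rewrite expr1n mulr1 => <-.
    apply: iint_le => y; first by rewrite lee_fin mulr_ge0 // ?indicE ltW.
    rewrite lee_fin !indicE.
    have [H|H] := boolp.pselect (@box R n a (a + 1) y); last first.
      by rewrite memNset // mulr0 mulr_ge0.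
    have [h1 h2] := fQ y H.
    by rewrite !mem_set ?mulr1 ?mul1r //; exact: eball_of h2 ht.
  pose K (T : R) := (m * ((2 * T) `^ sg)^-1) `^ e * (2 * T)^-1.
  have Wbound (x : 'rV[R]_n) : let T := 2 * (enorm x + bq) + 1 in
      ((K T * T)%:E <= wolff beta gamma f x)%E.
    move=> T.
    have T0 : 0 < T by rewrite /T; have := enorm_ge0 R n x; lra.
    have K0 : 0 <= K T by rewrite /K mulr_ge0 ?powR_ge0 // invr_ge0 ?mulr_ge0 //; lra.
    rewrite /wolff.
    have -> : [set t : R | 0 < t] = (`]0%R, +oo[%classic : set R).
      by apply/seteqP; split => t /=; rewrite in_itv /= andbT.
    have HE : (\int[lebesgue_measure]_(t in (`]0%R, +oo[%classic : set R))
        (K T * \1_(`[T, 2 * T]%classic) t)%:E)%E = (K T * T)%:E.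
      have HI := @integralZl_indic _ _ _ lebesgue_measure _ (measurable_itv `]0%R, +oo[)
        (fun _ => `[T, 2 * T]%classic) (K T).
      rewrite /= in HI; rewrite HI; [|by move=> H; exfalso; move: H; rewrite ltNge K0|exact: measurable_itv].
      have HI2 := @integral_indic _ _ _ lebesgue_measure _ (measurable_itv `]0%R, +oo[) (`[T, 2 * T]%classic) (measurable_itv _).
      rewrite HI2.
      rewrite setIidl; last first.
        move=> t /=; rewrite !in_itv /= andbT => /andP[h _]; lra.
      have HL := lebesgue_measure_itv `[T, 2 * T]%R. rewrite /= lte_fin in HL.
      have TT : T < 2 * T by lra.
      rewrite TT in HL.
      rewrite (_ : _ `[T, 2 * T]%classic = (2 * T - T)%:E); last exact: HL.
      by rewrite -EFinM; have -> : 2 * T - T = T by ring.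
    rewrite -HE; apply: le_int_nm => t; first by move=> _; rewrite lee_fin mulr_ge0 // indicE.
    rewrite /= in_itv /= andbT => t0.
    have G0 : (0 <= ((iint (fun y => (\1_(eball x t) y * f y)%:E) *
        ((t `^ (n%:R - beta * gamma))^-1)%:E) `^ (gamma - 1)^-1) * (t^-1)%:E)%E.
      by rewrite mule_ge0 ?poweR_ge0 // lee_fin invr_ge0 ltW.
    rewrite indicE; have [H|H] := boolp.pselect (`[T, 2 * T]%classic t); last first.
      by rewrite memNset // mulr0.
    rewrite mem_set // mulr1.
    move: H; rewrite /= in_itv /= => /andP[tT t2T].
    have sgpos : 0 <= sg by exact: ltW.
    have hI := Ibound x t tT.
    have T2 : 0 < 2 * T by lra.
    have hp : ((2 * T) `^ sg)^-1 <= (t `^ sg)^-1.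
      rewrite lef_pV2 ?posrE ?powR_gt0 //.
      by apply: ge0_ler_powR => //; rewrite nnegrE ltW.
    rewrite /K EFinM; apply: lee_pmul.
    - by rewrite lee_fin powR_ge0.
    - by rewrite lee_fin invr_ge0 ltW.
    - rewrite -poweR_EFin; apply: gt0_ler_poweR.
      + exact: ltW.
      + by rewrite in_itv /= leey andbT lee_fin mulr_ge0 ?invr_ge0 ?powR_ge0 // ltW.
      + rewrite in_itv /= leey andbT; apply: mule_ge0; last by rewrite lee_fin invr_ge0 powR_ge0.
        by apply: iint_ge0 => y; rewrite lee_fin mulr_ge0 // indicE.
      rewrite EFinM; apply: lee_pmul => //.
      + by rewrite lee_fin ltW.
      + by rewrite lee_fin invr_ge0 powR_ge0.
    - by rewrite lee_fin lef_pV2 ?posrE.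
  pose Dc := 2 * bq + 3.
  pose Z := ln cu + ln C1 - e * ln m + s0 * (ln 2 + ln Dc) + ln 2.
  have al : 0 < th1 - s0 by lra.
  have [mu1 mu2] : R0u <= Num.max R0u 0 /\ 0 <= Num.max R0u 0.
    by rewrite !le_max !lexx orbT.
  have [X [hX [X0' hZ]]] := log_big R _ Z (Num.max R0u 0 + 1) al.
  have [x [Nx hx]] := lnull_far R n N1 X n0 hN1.
  set nx := enorm x in hx.
  have nx1 : 1 <= nx by lra.
  have [_ uup] := ub x (ltac:(rewrite -/nx; lra)) (ltac:(rewrite -/nx; lra)).
  rewrite -/nx in uup.
  have hW := Wbound x; rewrite /= -/nx in hW.
  set T := 2 * (nx + bq) + 1 in hW.
  clear Wbound Ibound fQ hv ub hu Lu dirA.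
  have T0 : 0 < T by rewrite /T; lra.
  have bq0 : 0 < bq by lra.
  have KT0 : 0 < K T * T.
    by rewrite /K !mulr_gt0 ?invr_gt0 ?powR_gt0 ?mulr_gt0 ?invr_gt0 ?powR_gt0 //; lra.
  have ulow : C1^-1 * (K T * T) <= u x.
    rewrite -lee_fin (equ x Nx) EFinM; apply: lee_pmul.
    - by rewrite lee_fin invr_ge0 ltW.
    - by rewrite lee_fin ltW.
    - by have /andP[h _] := hc1 x; rewrite lee_fin.
    - exact: hW.
  have nx0 : 0 < nx := lt_le_trans ltr01 nx1.
  have hln : ln (C1^-1 * (K T * T)) <= ln (cu * nx `^ (- th1)).
    have A1 : 0 < C1^-1 * (K T * T) by rewrite mulr_gt0 ?invr_gt0.
    have A2 : 0 < cu * nx `^ (- th1) by rewrite mulr_gt0 ?powR_gt0.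
    rewrite ler_ln ?posrE //; exact: le_trans ulow uup.
  have KT0' : 0 < K T by move: KT0; rewrite pmulr_lgt0.
  rewrite [X in X <= _]lnM ?posrE ?invr_gt0 // lnV ?posrE // /K lnKT // in hln.
  rewrite [X in _ <= X]lnM ?posrE ?powR_gt0 // ln_powR in hln.
  have hT : ln T <= ln Dc + ln nx.
    have D0 : 0 < Dc by rewrite /Dc; lra.
    rewrite -lnM ?posrE // ler_ln ?posrE ?mulr_gt0 //.
    have h : 0 <= bq * (nx - 1) by rewrite mulr_ge0 ?subr_ge0 // ltW.
    rewrite /T /Dc; lra.
  have lX : ln X <= ln nx by rewrite ler_ln ?posrE //; lra.
  move: hZ al; rewrite /Z hs0e => hZ al.
  exact: (arithB R _ _ _ _ _ _ _ _ _ _ _ hln hT hZ lX (mulr_gt0 sig0 e0) al).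
have eth : th1 = s0 by apply/eqP; rewrite eq_le dirA dirB.
rewrite -eth; exists cu, R0u; split => //.
Qed.
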